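(* Let $d\ge 2$, $\mathcal{D}\subset\mathbb{R}^d$ open and bounded, $\mathcal{K}=\{0,\dots,\kappa-1\}$, $\boldsymbol{\phi}\in\mathcal{C}^\infty(\mathbb{R}^d,\mathbb{R}^\kappa)$. For all $k\in\mathcal{K}$, $$\mathcal{D}\cap\bigcup_{\mathcal{I}\in\mathbb{I}_k^2}\mathcal{E}_{\mathcal{I}}(\boldsymbol{\phi})=\mathcal{D}\cap\bigcup_{\mathcal{I}\in\mathbb{I}_k^r,\,r\ge 2}\mathcal{E}_{\mathcal{I}}(\boldsymbol{\phi})\subset\mathcal{D}\cap\partial\Omega_k(\boldsymbol{\phi}).$$ If in addition $|D\widehat{\boldsymbol{\phi}}_{\mathcal{I}}|>0$ on $\mathcal{M}_{\mathcal{I}}(\boldsymbol{\phi})$ for all $\mathcal{I}\in\mathbb{I}_k^2$, then $$\mathcal{D}\cap\bigcup_{\mathcal{I}\in\mathbb{I}_k^2}\mathcal{E}_{\mathcal{I}}(\boldsymbol{\phi})=\mathcal{D}\cap\bigcup_{\mathcal{I}\in\mathbb{I}_k^r,\,r\ge 2}\mathcal{E}_{\mathcal{I}}(\boldsymbol{\phi})=\mathcal{D}\cap\partial\Omega_k(\boldsymbol{\phi}).$$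
   Context: $\boldsymbol{\phi}=(\phi_0,\dots,\phi_{\kappa-1})$. For $j\in\mathcal{K}$, $\Omega_j(\boldsymbol{\phi})=\operatorname{int}\{x\in\mathcal{D}\mid\phi_j(x)\le\phi_m(x)\ \forall m\ne j\}$. $\mathbb{I}_k^r=\{\mathcal{I}\subset\mathcal{K}\mid|\mathcal{I}|=r,\ k\in\mathcal{I}\}$. For $\mathcal{I}=\{k_1<\dots<k_{|\mathcal{I}|}\}$, $\widehat{\boldsymbol{\phi}}_{\mathcal{I}}=(\phi_{k_1}-\phi_{k_2},\dots,\phi_{k_1}-\phi_{k_{|\mathcal{I}|}})$, $\mathcal{M}_{\mathcal{I}}(\boldsymbol{\phi})=\{x\in\overline{\mathcal{D}}\mid\widehat{\boldsymbol{\phi}}_{\mathcal{I}}(x)=0\}$, and $\mathcal{E}_{\mathcal{I}}(\boldsymbol{\phi})=\bigcap_{j\in\mathcal{I}}\partial\Omega_j(\boldsymbol{\phi})$ (boundaries in $\mathbb{R}^d$). *)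

(* Defs.v *)
From HB Require Import structures.
From mathcomp Require Import all_boot all_order all_algebra.
From mathcomp Require Import all_classical all_reals all_analysis.
Set Implicit Arguments. Unset Strict Implicit. Unset Printing Implicit Defensive.
Import Order.TTheory GRing.Theory Num.Theory.
Import numFieldNormedType.Exports.
Local Open Scope classical_set_scope.
Local Open Scope ring_scope.

Fixpoint Cn (R : realType) (d : nat) (n : nat) (f : 'rV[R]_d -> R) : Prop :=
  match n with
  | 0%N => continuous f
  | n'.+1 => (forall x, differentiable f x) /\
             (forall v : 'rV[R]_d, Cn n' (fun x => 'D_v f x))
  end.

Definition smooth (R : realType) (d : nat) (f : 'rV[R]_d -> R) : Prop :=
  forall n, Cn n f.

Definition boundary (R : realType) (d : nat) (A : set 'rV[R]_d) : set 'rV[R]_d :=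
  closure A `\` A°.

(* phi = (phi_0, ..., phi_{kappa-1}) given componentwise *)
Definition Omega (R : realType) (d kappa : nat) (D : set 'rV[R]_d)
  (phi : 'I_kappa -> 'rV[R]_d -> R) (j : 'I_kappa) : set 'rV[R]_d :=
  [set x | D x /\ forall m : 'I_kappa, m != j -> phi j x <= phi m x]°.

Definition IIkr (kappa : nat) (k : 'I_kappa) (r : nat) (I : {set 'I_kappa}) : Prop :=
  #|I| = r /\ k \in I.

Definition EI (R : realType) (d kappa : nat) (D : set 'rV[R]_d)
  (phi : 'I_kappa -> 'rV[R]_d -> R) (I : {set 'I_kappa}) : set 'rV[R]_d :=
  [set x | forall j : 'I_kappa, j \in I -> boundary (Omega D phi j) x].

(* hat phi_I = (phi_{k1} - phi_{k2}, ..., phi_{k1} - phi_{k_|I|}) where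
   enum I = [k1 < k2 < ... ] (enumeration of a set of ordinals is increasing);
   k0 is an irrelevant default index. *)
Definition phihat (R : realType) (d kappa : nat)
  (phi : 'I_kappa -> 'rV[R]_d -> R) (k0 : 'I_kappa) (I : {set 'I_kappa})
  : 'rV[R]_d -> 'rV[R]_(#|I|.-1) :=
  fun x => \row_(i < #|I|.-1)
     (phi (nth k0 (enum I) 0) x - phi (nth k0 (enum I) i.+1) x).

Definition MI (R : realType) (d kappa : nat) (D : set 'rV[R]_d)
  (phi : 'I_kappa -> 'rV[R]_d -> R) (k0 : 'I_kappa) (I : {set 'I_kappa})
  : set 'rV[R]_d :=
  [set x | closure D x /\ phihat phi k0 I x = 0].

(* Main.v *)
Require Import Defs.
From HB Require Import structures.
From mathcomp Require Import all_boot all_order all_algebra.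
From mathcomp Require Import all_classical all_reals all_analysis.
Import Order.TTheory GRing.Theory Num.Theory.
Import numFieldNormedType.Exports.
Local Open Scope classical_set_scope.
Local Open Scope ring_scope.
From mathcomp Require Import zify.
Lemma dloc0 (R : realType) (V W : normedModType R) (f : V -> W) (y : V) :
  (\forall z \near y, f z = 0) -> forall v, 'd f y v = 0.
Proof.
move=> fz v.
have fy : f y = 0 by apply: (nbhs_singleton fz).
suff -> : 'd f y = 0 :> (V -> W) by [].
apply: diff_unique; first exact: cst_continuous.
apply/eqaddoP => _/posnumP[e].
move/nbhs0P: fz => fz.
near=> h.
rewrite /= fy !addr0 subr0 /comp.
have -> : f (h + y) = 0 by rewrite addrC; near: h.
by rewrite normr0 mulr_ge0.
Unshelve. all: by end_near.
Qed.
Lemma fincover (T : topologicalType) (J : eqType) (Q : J -> set T) (s : seq J) :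
  (forall i, open (~` Q i)) ->
  forall W : set T, open W -> (exists y, W y) ->
  (forall y, W y -> exists2 i, i \in s & Q i y) ->
  exists i, i \in s /\ exists V : set T, open V /\ (exists y, V y) /\
     V `<=` W /\ V `<=` Q i.
Proof.
move=> oQ; elim: s => [|a s IH] W oW [y Wy] cov.
  by have [i] := cov y Wy.
have [WQ|] := pselect (W `<=` Q a).
  exists a; split; first by rewrite inE eqxx.
  by exists W; split => //; split; [exists y|split].
move=> /existsNP [z /not_implyP [Wz nQz]].
have cov' : forall t, (W `&` ~` Q a) t -> exists2 i, i \in s & Q i t.
  move=> t [Wt nQt]; have [i] := cov t Wt.
  by rewrite inE => /orP [/eqP ->|is_ Qi]; [|exists i].
have [i [is_ [V [oV [ne [VW VQ]]]]]] := IH (W `&` ~` Q a) (openI oW (oQ a)) (ex_intro _ z (conj Wz nQz)) cov'.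
exists i; split; first by rewrite inE is_ orbT.
exists V; split => //; split => //; split => // t Vt; by case: (VW t Vt).
Qed.
Theorem lemma2p6 (R : realType) (d kappa : nat) (D : set 'rV[R]_d)
  (phi : 'I_kappa -> 'rV[R]_d -> R) :
  (2 <= d)%N -> open D -> bounded_set D ->
  (forall j, smooth (phi j)) ->
  forall k : 'I_kappa,
    let U2 := [set x | exists I, IIkr k 2 I /\ EI D phi I x] in
    let Uall := [set x | exists r, (2 <= r)%N /\ exists I, IIkr k r I /\ EI D phi I x] in
    (D `&` U2 = D `&` Uall /\ D `&` Uall `<=` D `&` boundary (Omega D phi k)) /\
    ((forall I, IIkr k 2 I -> forall x, MI D phi k I x ->
        exists v : 'rV[R]_d, 'd (phihat phi k I) x v != 0) ->
     D `&` U2 = D `&` Uall /\ D `&` Uall = D `&` boundary (Omega D phi k)).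
Proof.
move=> d2 oD bD sm k U2 Uall.
have cphi j : continuous (phi j) := sm j 0%N.
pose S j := [set x | D x /\ forall m, m != j -> phi j x <= phi m x].
have OmE j : Omega D phi j = (S j)° by [].
have part1 : D `&` U2 = D `&` Uall /\ D `&` Uall `<=` D `&` boundary (Omega D phi k).
  have U2all : U2 `<=` Uall by move=> x [I [HI EIx]]; exists 2%N; split => //; exists I.
  have Uall2 : Uall `<=` U2.
    move=> x [r [r2 [I [[cI kI] EIx]]]].
    have : (0 < #|I :\ k|)%N.
      have := cardsD1 k I; rewrite kI cI /= => h.
      by move: r2; rewrite h add1n ltnS.
    case/card_gt0P => j; rewrite !inE => /andP [jk jI].
    exists [set k; j]%SET; split.
      by split; [rewrite cards2 eq_sym jk | rewrite !inE eqxx].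
    by move=> i; rewrite !inE => /orP [/eqP->|/eqP->]; apply: EIx.
  split; first by rewrite eqEsubset; split; apply: setIS.
  by move=> x [Dx [r [r2 [I [[cI kI] EIx]]]]]; split => //; exact: EIx.
split => //.
move=> nondeg; split; first by case: part1.
rewrite eqEsubset; split; first by case: part1.
move=> x [Dx [clk nik]].
have nik' : ~ Omega D phi k x.
  by move=> h; apply: nik; rewrite ((interior_id _).1 (open_interior _)).
have [[j [jk clj]]|Hn] := pselect (exists j, j != k /\ closure (Omega D phi j) x); last first.
  exfalso; apply: nik'.
  have nearj : \forall z \near x, forall j, j != k -> ~ Omega D phi j z.
    apply: (@filter_forall _ _ (fun j z => j != k -> ~ Omega D phi j z) (nbhs x) _) => j.
    case: (eqVneq j k) => [->|jk]; first by apply: nearW => z [].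
    have : ~ closure (Omega D phi j) x by move=> c; apply: Hn; exists j.
    move=> /existsNP [B /not_implyP [nB nI]].
    apply: filterS nB => z Bz _ Oz; by apply: nI; exists z.
  pose B0 := [set z | D z /\ forall j, j != k -> ~ Omega D phi j z].
  have nB : nbhs x B0.
    have nD : nbhs x D by move: oD; rewrite openE => /(_ x Dx).
    by apply: filterS (filterI nD nearj) => z [].
  have BS : B0° `<=` S k.
    move=> y By; have [Dy _] : B0 y := interior_subset By.
    split => //.
    have [//|nQ] := pselect (forall m, m != k -> phi k y <= phi m y).
    exfalso.
    pose Q j := [set z | forall m, m != j -> phi j z <= phi m z].
    have oQ j : open (~` Q j).
      rewrite openE => z /existsNP [m /not_implyP [mj /negP]].
      rewrite -ltNge => lt.
      have cf : (fun w => phi j w - phi m w) @ z --> (phi j z - phi m z).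
        exact: (cvgB (cphi j z) (cphi m z)).
      have nf : \forall t \near z, 0 < phi j t - phi m t.
        by apply: (cvgr_gt _ cf); rewrite subr_gt0.
      apply: filterS nf => w /= pw Qw.
      by move: pw; rewrite subr_gt0 ltNge (Qw m mj).
    have cov : forall z, (B0° `&` ~` Q k) z -> exists2 i, i \in enum 'I_kappa & Q i z.
      move=> z _; case: (arg_minP (fun i => phi i z) (isT : xpredT k)) => i _ Hi.
      by exists i; [rewrite mem_enum | move=> m _; exact: Hi].
    have [i [_ [V [oV [[z Vz] [VW VQ]]]]]] :=
      @fincover _ _ Q (enum 'I_kappa) oQ _ (openI (@open_interior _ B0) (oQ k)) (ex_intro _ y (conj By nQ)) cov.
    have ik : i != k.
      by apply/eqP => eik; have [_ nQkz] := VW z Vz; apply: nQkz; rewrite -eik; exact: VQ.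
    have Oiz : Omega D phi i z.
      rewrite OmE; have : V `<=` (S i)°; last by apply.
      rewrite -open_subsetE // => t Vt; split; last exact: VQ.
      by have [Bt _] := VW t Vt; have [] := interior_subset Bt.
    have [Bz _] := VW z Vz.
    by have [_ ] := interior_subset Bz; move/(_ i ik).
  rewrite OmE.
  have : B0° `<=` (S k)° by rewrite -open_subsetE //; exact: open_interior.
  by apply; exact: nB.
have njx : ~ Omega D phi j x.
  move=> Ojx.
  have nO : nbhs x (Omega D phi j).
    by have := @open_interior _ (S j); rewrite openE => /(_ x Ojx).
  have [y [Oky Ojy]] := clk _ nO.
  have Dy : D y by have [] := nbhs_singleton Oky.
  have cI : #|[set k; j]%SET| = 2%N by rewrite cards2 eq_sym jk.
  have eqn : \forall z \near y, phihat phi k [set k; j]%SET z = 0.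
    near=> z.
    have [_ Hk] : S k z by near: z.
    have [_ Hj] : S j z by near: z.
    have e : phi k z = phi j z by apply/le_anti; rewrite Hk ?Hj // eq_sym.
    apply/rowP => i; rewrite !mxE.
    have memI a : a \in [set k; j]%SET -> phi a z = phi k z.
      by rewrite !inE => /orP [/eqP->|/eqP->].
    rewrite !memI ?subrr // -mem_enum; apply: mem_nth; rewrite -cardE;
      have := ltn_ord i; move: (nat_of_ord i) => n; rewrite cI //.
  have kin : k \in [set k; j]%SET by rewrite !inE eqxx.
  have [v nv] := nondeg [set k; j]%SET (conj cI kin) y (conj (subset_closure Dy) (nbhs_singleton eqn)).
  by rewrite dloc0 ?eqxx in nv.
split => //.
exists 2%N; split => //; exists [set k; j]%SET; split.
  by split; [rewrite cards2 eq_sym jk | rewrite !inE eqxx].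
move=> i; rewrite !inE => /orP [/eqP->|/eqP->]; split => //.
by move=> /interior_subset.
Unshelve. all: by end_near.
Qed.
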